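(* Let $(X,\varphi)$ be a Smale space, $(Y,f)$ a finitely presented system, and $\pi:X\to Y$ an almost one-to-one $u$-resolving factor map. Let $P\subseteq Y$ be a finite set of synchronizing periodic points such that $\pi^{-1}(p)$ is a single point for each $p\in P$, and let $Q=\pi^{-1}(P)$. Then for each $y\in Y^u(P)$, $\pi^{-1}(y)=\{x\}$ for some $x\in X^u(Q)$ (i.e. $y$ has a unique preimage under $\pi:X\to Y$, and it lies in $X^u(Q)$).
   Context: Dynamical systems are compact metric spaces with homeomorphisms. Expansive: some $\varepsilon_X>0$ with $d(\varphi^nx,\varphi^ny)\le\varepsilon_X$ for all $n\in\mathbb{Z}$ implying $x=y$. A Smale space is a system equipped with a bracket map satisfying Ruelle's axioms; a finitely presented system is an expansive factor of a shift of finite type. Factor map: continuous surjection intertwining the homeomorphisms. $x\sim_u y$ iff $d(\varphi^{-n}x,\varphi^{-n}y)\to0$ as $n\to\infty$; $X^u(x)$ is the class of $x$ and $X^u(P)=\bigcup_{p\in P}X^u(p)$. $\pi$ is $u$-resolving if it is injective on each $X^u(x)$, almost one-to-one if a residual set of points has a unique preimage. A point $y$ is synchronizing if it has a local product neighbourhood: for some $\delta>0$ the bracket ($[a,b]$ = unique point of $Y^s(a,\varepsilon)\cap Y^u(b,\varepsilon)$, where $Y^s(a,\varepsilon)=\{z:d(f^na,f^nz)<\varepsilon\ \forall n\ge0\}$ and $Y^u$ likewise with $f^{-n}$) maps $Y^u(y,\delta)\times Y^s(y,\delta)$ homeomorphically onto an open neighbourhood of $y$. *)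

(* Defs.v *)
From Stdlib Require Import Reals List ZArith Lia Lra.
Open Scope R_scope.

Record cms := CMS {
  pt :> Type;
  dist : pt -> pt -> R;
  dist_nonneg : forall x y, 0 <= dist x y;
  dist_eq0 : forall x y, dist x y = 0 <-> x = y;
  dist_sym : forall x y, dist x y = dist y x;
  dist_tri : forall x y z, dist x z <= dist x y + dist y z;
  (* compactness (for metric spaces: sequential compactness) *)
  seq_compact : forall u : nat -> pt, exists (s : nat -> nat) (l : pt),
      (forall k, (s k < s (S k))%nat) /\
      (forall e, e > 0 -> exists N, forall k, (N <= k)%nat -> dist (u (s k)) l < e)
}.
Arguments dist {c} _ _.

Definition continuous_map {X Y : cms} (g : X -> Y) : Prop :=
  forall x e, e > 0 -> exists d, d > 0 /\
    forall x', dist x x' < d -> dist (g x) (g x') < e.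

Record dynsys := DS {
  sp :> cms;
  hom : sp -> sp;
  hinv : sp -> sp;
  hinv_hom : forall x, hinv (hom x) = x;
  hom_hinv : forall x, hom (hinv x) = x;
  hom_cont : continuous_map hom;
  hinv_cont : continuous_map hinv
}.
Arguments hom {d} _.
Arguments hinv {d} _.

Definition fw {X : dynsys} (n : nat) (x : X) : X := Nat.iter n hom x.
Definition bw {X : dynsys} (n : nat) (x : X) : X := Nat.iter n hinv x.

Definition expansive_const (X : dynsys) (e : R) : Prop :=
  e > 0 /\ forall x y : X,
    (forall n, dist (fw n x) (fw n y) <= e /\ dist (bw n x) (bw n y) <= e) -> x = y.

Definition expansive (X : dynsys) : Prop := exists e, expansive_const X e.

Record smale_structure (X : dynsys) := SmaleStr {
  sm_eps : R;
  sm_lam : R;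
  sm_br : X -> X -> X;
  sm_eps_pos : sm_eps > 0;
  sm_lam_range : 0 < sm_lam < 1;
  sm_br_cont : forall x y e, dist x y <= sm_eps -> e > 0 -> exists d, d > 0 /\
      forall x' y', dist x' y' <= sm_eps -> dist x x' < d -> dist y y' < d ->
        dist (sm_br x y) (sm_br x' y') < e;
  sm_B1 : forall x, sm_br x x = x;
  sm_B2 : forall x y z, dist y z <= sm_eps -> dist x (sm_br y z) <= sm_eps ->
      dist x z <= sm_eps -> sm_br x (sm_br y z) = sm_br x z;
  sm_B3 : forall x y z, dist x y <= sm_eps -> dist (sm_br x y) z <= sm_eps ->
      dist x z <= sm_eps -> sm_br (sm_br x y) z = sm_br x z;
  sm_B4 : forall x y, dist x y <= sm_eps -> dist (hom x) (hom y) <= sm_eps ->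
      hom (sm_br x y) = sm_br (hom x) (hom y);
  sm_C1 : forall x y, dist x y <= sm_eps -> sm_br x y = y ->
      dist (hom x) (hom y) <= sm_lam * dist x y;
  sm_C2 : forall x y, dist x y <= sm_eps -> sm_br x y = x ->
      dist (hinv x) (hinv y) <= sm_lam * dist x y
}.

Definition smale_space (X : dynsys) : Prop := exists _ : smale_structure X, True.

(** an SFT over the alphabet {0,..,alph-1}: bi-infinite sequences all of whose
    windows of length win+1 are allowed words *)
Record sft := SFT { alph : nat; win : nat; allowed : list nat -> Prop }.

Definition in_sft (Sg : sft) (x : Z -> nat) : Prop :=
  (forall i, (x i < alph Sg)%nat) /\
  (forall i, allowed Sg (map (fun k => x (i + Z.of_nat k)%Z) (seq 0 (S (win Sg))))).

Definition shift (x : Z -> nat) : Z -> nat := fun i => x (i + 1)%Z.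

(** psi : Sigma_S -> Y is a factor map (continuous for the product topology,
    surjective, intertwining the shift with f) *)
Definition sft_factor (Sg : sft) (Y : dynsys) (psi : (Z -> nat) -> Y) : Prop :=
  (forall x, in_sft Sg x -> psi (shift x) = hom (psi x)) /\
  (forall y : Y, exists x, in_sft Sg x /\ psi x = y) /\
  (forall x, in_sft Sg x -> forall e, e > 0 -> exists N : nat, forall x', in_sft Sg x' ->
      (forall i, (- Z.of_nat N <= i <= Z.of_nat N)%Z -> x' i = x i) ->
      dist (psi x) (psi x') < e).

Definition finitely_presented (Y : dynsys) : Prop :=
  expansive Y /\ exists (Sg : sft) (psi : (Z -> nat) -> Y), sft_factor Sg Y psi.

Definition factor_map {X Y : dynsys} (pi : X -> Y) : Prop :=
  continuous_map pi /\ (forall y : Y, exists x, pi x = y) /\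
  (forall x, pi (hom x) = hom (pi x)).

Definition unst_eq {X : dynsys} (x y : X) : Prop :=
  forall e, e > 0 -> exists N, forall n, (N <= n)%nat -> dist (bw n x) (bw n y) < e.

Definition u_resolving {X Y : dynsys} (pi : X -> Y) : Prop :=
  forall x x' : X, unst_eq x x' -> pi x = pi x' -> x = x'.

Definition open_set {X : cms} (U : X -> Prop) : Prop :=
  forall x, U x -> exists r, r > 0 /\ forall z, dist x z < r -> U z.

Definition dense_set {X : cms} (U : X -> Prop) : Prop :=
  forall x r, r > 0 -> exists z, U z /\ dist x z < r.

(** almost one-to-one: a residual set (containing a countable intersection of
    dense open sets) of points of Y have a unique preimage *)
Definition almost_one_to_one {X Y : dynsys} (pi : X -> Y) : Prop :=
  exists U : nat -> Y -> Prop, (forall k, open_set (U k) /\ dense_set (U k)) /\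
    forall y, (forall k, U k y) -> exists x, forall x', pi x' = y <-> x' = x.

Definition loc_s {X : dynsys} (a : X) (e : R) (z : X) : Prop :=
  forall n, dist (fw n a) (fw n z) < e.
Definition loc_u {X : dynsys} (a : X) (e : R) (z : X) : Prop :=
  forall n, dist (bw n a) (bw n z) < e.

(** The bracket [a,b] is the
    unique point of Y^s(a,eps) ∩ Y^u(b,eps), for a small eps (2*eps an expansive
    constant); (a,b) |-> [a,b] maps Y^u(y,delta) x Y^s(y,delta) homeomorphically
    onto an open neighbourhood of y. *)
Definition synchronizing {Y : dynsys} (y : Y) : Prop :=
  exists (eps delta : R) (g : Y -> Y -> Y),
    eps > 0 /\ delta > 0 /\ expansive_const Y (2 * eps) /\
    let D := fun a b => loc_u y delta a /\ loc_s y delta b in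
    let U := fun z => exists a b, D a b /\ g a b = z in
    (forall a b, D a b ->
       loc_s a eps (g a b) /\ loc_u b eps (g a b) /\
       (forall z, loc_s a eps z -> loc_u b eps z -> z = g a b)) /\
    (forall a b e, D a b -> e > 0 -> exists d, d > 0 /\
       forall a' b', D a' b' -> dist a a' < d -> dist b b' < d ->
         dist (g a b) (g a' b') < e) /\
    (forall a b a' b', D a b -> D a' b' -> g a b = g a' b' -> a = a' /\ b = b') /\
    (forall a b e, D a b -> e > 0 -> exists d, d > 0 /\
       forall a' b', D a' b' -> dist (g a b) (g a' b') < d ->
         dist a a' < e /\ dist b b' < e) /\
    open_set U /\ U y.

Definition periodic {Y : dynsys} (p : Y) : Prop :=
  exists n, (n > 0)%nat /\ fw n p = p.

(* Main.v *)
Require Import Defs.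
From Stdlib Require Import Reals List.
From Stdlib Require Import Lra Lia Classical IndefiniteDescription.
Import Defs.
Open Scope R_scope.

Lemma bw_add {X : dynsys} a b (x : X) : bw (a + b) x = bw a (bw b x).
Proof. induction a; unfold bw in *; simpl; [reflexivity|]. now rewrite IHa. Qed.

Lemma bw_fw {X : dynsys} n (x : X) : bw n (fw n x) = x.
Proof.
  induction n; [reflexivity|].
  replace (S n) with (n + 1)%nat at 1 by lia. rewrite bw_add.
  change (bw n (bw 1 (hom (fw n x))) = x). unfold bw at 2; simpl. rewrite hinv_hom. exact IHn.
Qed.

Lemma bw_mul_fix {X : dynsys} n (z : X) : bw n z = z -> forall k, bw (k * n) z = z.
Proof.
  intros h k; induction k; [reflexivity|].
  simpl. rewrite bw_add, IHk. exact h.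
Qed.

Lemma pi_bw {X Y : dynsys} (pi : X -> Y) : factor_map pi ->
  forall m x, pi (bw m x) = bw m (pi x).
Proof.
  intros [_ [_ hc]] m; induction m; intro x; [reflexivity|].
  change (pi (hinv (bw m x)) = hinv (bw m (pi x))). rewrite <- IHm.
  set (z := bw m x).
  rewrite <- (hinv_hom _ (pi (hinv z))). rewrite <- hc, hom_hinv. reflexivity.
Qed.

Lemma bw_cont {X : dynsys} m : continuous_map (@bw X m).
Proof.
  induction m; intros x e he.
  - exists e; split; auto.
  - destruct (hinv_cont X (bw m x) e he) as [d1 [hd1 h1]].
    destruct (IHm x d1 hd1) as [d [hd h]].
    exists d; split; auto. intros x' hx'. apply h1, h, hx'.
Qed.

Lemma cont_small {Z : dynsys} (q : Z) e : e > 0 -> forall r, exists d, d > 0 /\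
  forall z, dist q z < d -> forall r', (r' <= r)%nat -> dist (bw r' q) (bw r' z) < e.
Proof.
  intros he r; induction r.
  - exists e; split; auto. intros z hz r' hr'. replace r' with 0%nat by lia. exact hz.
  - destruct IHr as [d1 [hd1 h1]].
    destruct (bw_cont (S r) q e he) as [d2 [hd2 h2]].
    exists (Rmin d1 d2); split; [apply Rmin_pos; auto|].
    intros z hz r' hr'. destruct (Nat.eq_dec r' (S r)) as [->|hne].
    + apply h2. pose proof (Rmin_r d1 d2); lra.
    + apply h1; [pose proof (Rmin_l d1 d2); lra | lia].
Qed.

Lemma key {X Y : dynsys} (pi : X -> Y) (fm : factor_map pi) (p : Y) n
  (hn : (n > 0)%nat) (hp : bw n p = p) (q : X) (hq : forall x', pi x' = p <-> x' = q)
  (x : X) (hx : unst_eq (pi x) p) : unst_eq x q.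
Proof.
  assert (hqf : bw n q = q).
  { apply hq. rewrite (pi_bw pi fm). rewrite (proj2 (hq q) eq_refl). exact hp. }
  assert (conv: forall e, e > 0 -> exists K, forall k, (K <= k)%nat -> dist (bw (k*n) x) q < e).
  { intros e he. apply NNPP. intro Hn.
    assert (H: forall K, exists k, (K <= k)%nat /\ e <= dist (bw (k*n) x) q).
    { intro K. apply NNPP; intro H2. apply Hn. exists K. intros k hk.
      destruct (Rlt_or_le (dist (bw (k*n) x) q) e) as [h|h]; auto.
      exfalso; apply H2; eauto. }
    set (g := fun K => proj1_sig (constructive_indefinite_description _ (H K))).
    assert (hg: forall K, (K <= g K)%nat /\ e <= dist (bw (g K * n) x) q).
    { intro K; unfold g; destruct (constructive_indefinite_description _ _); simpl; auto. }
    destruct (seq_compact (sp X) (fun j => bw (g j * n) x)) as [s [l [hs hl]]].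
    assert (hsk: forall k, (k <= s k)%nat).
    { induction k; [lia| specialize (hs k); lia]. }
    assert (hlq: l = q).
    { apply hq. destruct (Req_dec (dist (pi l) p) 0) as [h0|h0].
      { apply (proj1 (dist_eq0 _ _ _)); auto. }
      exfalso. set (e' := dist (pi l) p).
      assert (he': e' > 0) by (pose proof (dist_nonneg _ (pi l) p); unfold e'; lra).
      pose proof fm as [fc _]. destruct (fc l (e'/2)) as [d [hd hd']]; [lra|].
      destruct (hl d hd) as [N1 hN1].
      destruct (hx (e'/2)) as [N2 hN2]; [lra|].
      set (k := (N1 + N2)%nat).
      specialize (hN1 k ltac:(unfold k; lia)).
      assert (h1: dist (pi l) (pi (bw (g (s k) * n) x)) < e'/2).
      { apply hd'; rewrite dist_sym; auto. }
      rewrite (pi_bw pi fm) in h1.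
      assert (h2: dist (bw (g (s k) * n) (pi x)) p < e'/2).
      { rewrite <- (bw_mul_fix n p hp (g (s k))). apply hN2.
        destruct (hg (s k)) as [hg1 _]. specialize (hsk k).
        assert (g (s k) <= g (s k) * n)%nat by nia. unfold k in *; lia. }
      pose proof (dist_tri _ (pi l) (bw (g (s k) * n) (pi x)) p). unfold e' in *; lra. }
    destruct (hl e he) as [N hN]. specialize (hN N (le_n N)). rewrite hlq in hN.
    destruct (hg (s N)). simpl in hN. lra. }
  intros e he. destruct (cont_small q e he n) as [d [hd hd']].
  destruct (conv d hd) as [K hK]. exists (K*n)%nat. intros m hm.
  pose proof (Nat.div_mod m n ltac:(lia)) as hm'.
  pose proof (Nat.mod_upper_bound m n ltac:(lia)) as hr.
  set (k := (m / n)%nat) in *; set (r := (m mod n)%nat) in *.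
  assert (hkK: (K <= k)%nat).
  { destruct (Nat.le_gt_cases K k) as [h|h]; auto.
    assert (n * (k+1) <= n * K)%nat by (apply Nat.mul_le_mono_l; lia). nia. }
  rewrite hm'. replace (n*k+r)%nat with (r + k*n)%nat by lia.
  rewrite !bw_add, (bw_mul_fix n q hqf).
  rewrite dist_sym; apply hd'; [rewrite dist_sym; apply hK; lia | lia].
Qed.

Lemma unst_trans {X : dynsys} (a b c : X) : unst_eq a b -> unst_eq c b -> unst_eq a c.
Proof.
  intros h1 h2 e he.
  destruct (h1 (e/2)) as [N1 hN1]; [lra|]. destruct (h2 (e/2)) as [N2 hN2]; [lra|].
  exists (N1 + N2)%nat. intros m hm.
  specialize (hN1 m ltac:(lia)); specialize (hN2 m ltac:(lia)).
  rewrite dist_sym in hN2.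
  pose proof (dist_tri _ (bw m a) (bw m b) (bw m c)). lra.
Qed.

Theorem mainTheorem3 (X Y : dynsys) (pi : X -> Y) (P : list Y) :
  smale_space X ->
  finitely_presented Y ->
  factor_map pi ->
  almost_one_to_one pi ->
  u_resolving pi ->
  (forall p, In p P ->
     periodic p /\ synchronizing p /\ exists x, forall x', pi x' = p <-> x' = x) ->
  forall y : Y, (exists p, In p P /\ unst_eq y p) ->
  exists x : X, (forall x', pi x' = y <-> x' = x) /\
    (exists q : X, In (pi q) P /\ unst_eq x q).
Proof.
  intros _ _ fm _ ur hP y [p [hpP hyp]].
  destruct (hP p hpP) as [[n [hn hfw]] [_ [q hq]]].
  assert (hbw : bw n p = p) by (rewrite <- hfw at 1; apply bw_fw).
  pose proof fm as [_ [surj _]]. destruct (surj y) as [x0 hx0].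
  assert (K : forall x, pi x = y -> unst_eq x q).
  { intros x hx. apply (key pi fm p n hn hbw q hq). rewrite hx; exact hyp. }
  exists x0. split.
  - intro x'; split; [|intros ->; exact hx0].
    intro hx'. apply ur; [| congruence].
    apply (unst_trans _ q); apply K; auto.
  - exists q. split; [rewrite (proj2 (hq q) eq_refl); exact hpP | apply K; exact hx0].
Qed.
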